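(* Let $d\ge2$, $L\ge1$, $\lambda>0$, let $\mu_0^\star,\mu_1^\star\in\mathbb{S}^{d-1}$ be orthonormal, and let the rows $X_1,\dots,X_L$ of $\mathbb{X}$ be i.i.d. with law $\frac12\delta_{\mu_0^\star}+\frac12\delta_{\mu_1^\star}$. Then for all $\mu_0,\mu_1\in\mathbb{R}^d$, $\mathcal{R}(\mu_0,\mu_1)=\mathcal{R}^<(\kappa_0,\kappa_1,\eta_0,\eta_1)$ where $\mathcal{R}^<:\mathbb{R}^4\to\mathbb{R}$ is $$\mathcal{R}^<(\kappa_0,\kappa_1,\eta_0,\eta_1)=1-\lambda\frac{L+1}{L}(\kappa_0^2+\kappa_1^2+\eta_0^2+\eta_1^2)+\lambda^2\frac{L+3}{2L}\big([\kappa_0^2+\eta_0^2]^2+[\kappa_1^2+\eta_1^2]^2\big)+\lambda^2\frac{L-1}{L}(\kappa_0\eta_1+\kappa_1\eta_0)^2.$$ In addition, if $(\mu_0,\mu_1)\in(\mathbb{S}^{d-1})^2$, then $(\kappa_0,\kappa_1,\eta_0,\eta_1)\in[-1,1]^4$.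
   Context: $\kappa_0=\langle\mu_0^\star,\mu_0\rangle$, $\kappa_1=\langle\mu_1^\star,\mu_1\rangle$, $\eta_0=\langle\mu_1,\mu_0^\star\rangle$, $\eta_1=\langle\mu_0,\mu_1^\star\rangle$. $T^{\mathrm{lin},\mu_0,\mu_1}(\mathbb{X})_\ell=\frac{2}{L}\sum_{k=1}^L\lambda\,X_\ell^\top(\mu_0\mu_0^\top+\mu_1\mu_1^\top)X_k\,X_k$ and $\mathcal{R}(\mu_0,\mu_1)=\frac1L\sum_{\ell=1}^L\mathbb{E}\|X_\ell-T^{\mathrm{lin},\mu_0,\mu_1}(\mathbb{X})_\ell\|_2^2$. *)

(* Defs.v *)
From mathcomp Require Import all_boot all_order all_algebra.
Set Implicit Arguments. Unset Strict Implicit. Unset Printing Implicit Defensive.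
Import Order.TTheory GRing.Theory Num.Theory.
Local Open Scope ring_scope.

Section Defs.
Variable R : realFieldType.

Definition dotv (d : nat) (u v : 'rV[R]_d) : R := \sum_(i < d) u 0 i * v 0 i.
Definition sqnorm (d : nat) (u : 'rV[R]_d) : R := dotv u u.

(* T^{lin,mu0,mu1}(X)_l = 2/L sum_k lambda X_l^T (mu0 mu0^T + mu1 mu1^T) X_k X_k,
   with X_l written as a row vector, so X_l^T M X_k = (X_l *m M *m X_k^T) 0 0. *)
Definition Tlin (d L : nat) (lambda : R) (mu0 mu1 : 'rV[R]_d)
    (X : 'I_L -> 'rV[R]_d) (l : 'I_L) : 'rV[R]_d :=
  (2 / L%:R) *: \sum_(k < L)
     (lambda * (X l *m (mu0^T *m mu0 + mu1^T *m mu1) *m (X k)^T) 0 0) *: X k.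

(* Expectation over X_1..X_L i.i.d. with law 1/2 delta_{a0} + 1/2 delta_{a1}:
   the uniform average over all 2^L choices s : 'I_L -> bool
   (s l = false <-> X_l = a0, s l = true <-> X_l = a1). *)
Definition Eiid (d L : nat) (a0 a1 : 'rV[R]_d) (f : ('I_L -> 'rV[R]_d) -> R) : R :=
  (1 / (2 ^+ L)) * \sum_(s : {ffun 'I_L -> bool})
     f (fun l => if s l then a1 else a0).

Definition risk (d L : nat) (lambda : R) (ms0 ms1 mu0 mu1 : 'rV[R]_d) : R :=
  (1 / L%:R) * \sum_(l < L)
     Eiid ms0 ms1 (fun X => sqnorm (X l - Tlin lambda mu0 mu1 X l)).

Definition risk_lt (L : nat) (lambda k0 k1 e0 e1 : R) : R :=
  1 - lambda * ((L%:R + 1) / L%:R) * (k0 ^+ 2 + k1 ^+ 2 + e0 ^+ 2 + e1 ^+ 2)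
  + lambda ^+ 2 * ((L%:R + 3) / (2 * L%:R))
      * ((k0 ^+ 2 + e0 ^+ 2) ^+ 2 + (k1 ^+ 2 + e1 ^+ 2) ^+ 2)
  + lambda ^+ 2 * ((L%:R - 1) / L%:R) * (k0 * e1 + k1 * e0) ^+ 2.

End Defs.

(* Main.v *)
Require Import Defs.
From mathcomp Require Import all_boot all_order all_algebra.
From mathcomp Require Import ring lra.
Import Order.TTheory GRing.Theory Num.Theory.
Local Open Scope ring_scope.
Set Implicit Arguments. Unset Strict Implicit.

Section Aux.
Variable R : realFieldType.
Variable d : nat.
Implicit Types u v w : 'rV[R]_d.

Lemma dotvC u v : dotv u v = dotv v u.
Proof. by apply: eq_bigr => i _; rewrite mulrC. Qed.
Lemma dotvDl u v w : dotv (u + v) w = dotv u w + dotv v w.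
Proof. by rewrite /dotv -big_split; apply: eq_bigr => i _; rewrite mxE mulrDl. Qed.
Lemma dotvNl u w : dotv (- u) w = - dotv u w.
Proof. by rewrite /dotv -sumrN; apply: eq_bigr => i _; rewrite mxE mulNr. Qed.
Lemma dotvZl a u w : dotv (a *: u) w = a * dotv u w.
Proof. by rewrite /dotv mulr_sumr; apply: eq_bigr => i _; rewrite mxE mulrA. Qed.
Lemma dotvBl u v w : dotv (u - v) w = dotv u w - dotv v w.
Proof. by rewrite dotvDl dotvNl. Qed.
Lemma dotvDr u v w : dotv w (u + v) = dotv w u + dotv w v.
Proof. by rewrite dotvC dotvDl !(dotvC w). Qed.
Lemma dotvBr u v w : dotv w (u - v) = dotv w u - dotv w v.
Proof. by rewrite dotvC dotvBl !(dotvC w). Qed.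
Lemma dotvZr a u w : dotv w (a *: u) = a * dotv w u.
Proof. by rewrite dotvC dotvZl dotvC. Qed.
Lemma dotvNr u w : dotv w (- u) = - dotv w u.
Proof. by rewrite dotvC dotvNl dotvC. Qed.
Lemma sqnorm_ge0 u : 0 <= sqnorm u.
Proof. by apply: sumr_ge0 => i _; rewrite -expr2 sqr_ge0. Qed.

Lemma dot_bound u v : sqnorm u = 1 -> sqnorm v = 1 -> -1 <= dotv u v <= 1.
Proof.
move=> hu hv.
have h1 := sqnorm_ge0 (u - v); have h2 := sqnorm_ge0 (u + v).
move: h1 h2; rewrite /sqnorm !(dotvDl, dotvNl, dotvDr, dotvNr) -/(sqnorm u) -/(sqnorm v) hu hv (dotvC v u).
move=> h1 h2; apply/andP; split; lra.
Qed.

Lemma mx_entry (x m0 y : 'rV[R]_d) :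
  (x *m m0^T *m m0 *m y^T) 0 0 = dotv x m0 * dotv m0 y :> R.
Proof.
have -> : x *m m0^T = (dotv x m0)%:M.
  apply/matrixP => i j; rewrite !ord1 !mxE /= mulr1n.
  by apply: eq_bigr => k _; rewrite !mxE.
rewrite mul_scalar_mx -scalemxAl mxE; congr (_ * _).
by rewrite mxE; apply: eq_bigr => k _; rewrite !mxE.
Qed.

Lemma bilin (x y m0 m1 : 'rV[R]_d) :
  (x *m (m0^T *m m0 + m1^T *m m1) *m y^T) 0 0
  = dotv x m0 * dotv m0 y + dotv x m1 * dotv m1 y :> R.
Proof.
by rewrite mulmxDr !mulmxA mulmxDl mxE !mx_entry.
Qed.
End Aux.

Section Mom.
Variable R : realFieldType.
Variable L : nat.
Definition ind (b : bool) : R := if b then 1 else 0.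
Definition e (i j : 'I_L) := ind (i == j).

Lemma sum_prod (F : 'I_L -> bool -> R) :
  \sum_(s : {ffun 'I_L -> bool}) \prod_i F i (s i) = \prod_i (F i true + F i false).
Proof. by rewrite -bigA_distr_bigA; apply: eq_bigr => i _; rewrite big_bool. Qed.

Lemma cardS3 (a b c : 'I_L) :
  (1 + e a b + e a c + e b c) * 2 ^+ #|a |: (b |: [set c])| = 8.
Proof.
rewrite /e /ind.
case: (eqVneq a b) => [?|hab]; case: (eqVneq a c) => [?|hac]; case: (eqVneq b c) => [?|hbc];
  subst; try (by match goal with H: is_true (?x != ?x) |- _ => rewrite eqxx in H end);
  rewrite !cardsU1 cards1 !inE ?eqxx /=;
  repeat (match goal with H : is_true (?x != ?y) |- _ => rewrite ?(negbTE H) ?(eq_sym y x) ?(negbTE H) /=; clear H end);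
  rewrite /= ?expr1 ?exprS ?expr0; lra.
Qed.


Lemma E3 (a b c : 'I_L) : \sum_(s : {ffun 'I_L -> bool}) ind (s a) * ind (s b) * ind (s c)
  = (1 + e a b + e a c + e b c) / 8 * 2 ^+ L.
Proof.
set S := a |: (b |: [set c]).
have pw (s : {ffun 'I_L -> bool}) : ind (s a) * ind (s b) * ind (s c)
   = \prod_i (if i \in S then ind (s i) else 1).
  rewrite -big_mkcond.
  have Hz x : x \in S -> s x = false -> \prod_(i in S) ind (s i) = 0.
    by move=> xS sx; rewrite (bigD1 x) //= /ind sx mul0r.
  case ha: (s a); last by rewrite (Hz a) ?inE ?eqxx // /ind !mul0r.
  case hb: (s b); last by rewrite (Hz b) ?inE ?eqxx ?orbT // /ind mulr0 mul0r.
  case hc: (s c); last by rewrite (Hz c) ?inE ?eqxx ?orbT // /ind !mulr0.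
  rewrite big1 /ind ?ha ?hb ?hc ?mulr1 // => i.
  by rewrite !inE => /or3P [] /eqP ->; rewrite /ind ?ha ?hb ?hc.
rewrite (eq_bigr _ (fun s _ => pw s)) (sum_prod (fun i b => if i \in S then ind b else 1)).
rewrite (eq_bigr (fun i => if i \in ~: S then 2 else 1)); last first.
  by move=> i _; rewrite in_setC; case: (i \in S) => /=; rewrite /ind ?addr0.
rewrite -(big_mkcond (fun i => i \in ~: S)) prodr_const.
have hc := cardsC S; rewrite card_ord in hc; rewrite -[in RHS]hc.
rewrite exprD mulrA.
have -> : (1 + e a b + e a c + e b c) / 8 * 2 ^+ #|S| = 1.
  by rewrite mulrAC cardS3 divff // pnatr_eq0.
by rewrite mul1r.
Qed.

Ltac fld := field; rewrite ?pnatr_eq0 //.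

Lemma indK b : ind b * ind b = ind b.
Proof. by case: b; rewrite /ind ?mulr1 ?mulr0. Qed.

Lemma sum_e (l : 'I_L) : \sum_k e l k = 1.
Proof.
rewrite (bigD1 l) //= big1 /e /ind ?eqxx ?addr0 // => k.
by rewrite eq_sym => /negbTE ->.
Qed.

Lemma sum_lin2 (a b : 'I_L) x y z :
  \sum_k (x + y * e a k + z * e b k) = L%:R * x + y + z.
Proof.
rewrite !big_split /= sumr_const card_ord -!mulr_sumr !sum_e !mulr1 mulr_natl //.
Qed.

Definition nn (s : {ffun 'I_L -> bool}) := \sum_k ind (s k).

Lemma M0 : \sum_(s : {ffun 'I_L -> bool}) (1 : R) = 2 ^+ L.
Proof. by rewrite sumr_const card_ffun card_bool card_ord natrX. Qed.

Lemma M1 l : \sum_(s : {ffun 'I_L -> bool}) ind (s l) = 2 ^+ L / 2.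
Proof.
rewrite (eq_bigr (fun s : {ffun 'I_L -> bool} => ind (s l) * ind (s l) * ind (s l))); last by move=> s _; rewrite !indK.
rewrite E3 /e /ind eqxx; fld.
Qed.

Lemma M2 : \sum_(s : {ffun 'I_L -> bool}) nn s = L%:R * 2 ^+ L / 2.
Proof.
rewrite /nn exchange_big /= (eq_bigr (fun _ => 2 ^+ L / 2)); last by move=> k _; rewrite M1.
by rewrite sumr_const card_ord -mulr_natl; fld.
Qed.

Lemma M3 : \sum_(s : {ffun 'I_L -> bool}) nn s ^+ 2 = (L%:R ^+ 2 + L%:R) / 4 * 2 ^+ L.
Proof.
rewrite /nn (eq_bigr (fun s : {ffun 'I_L -> bool} => \sum_k \sum_k' ind (s k) * ind (s k) * ind (s k'))); last first.
  by move=> s _; rewrite expr2 mulr_suml; apply: eq_bigr => k _; rewrite mulr_sumr; apply: eq_bigr => k' _; rewrite indK.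
rewrite exchange_big /=.
rewrite (eq_bigr (fun k : 'I_L => \sum_(k' < L) (2 ^+ L / 4 + 2 ^+ L / 4 * e k k' + 0 * e k k'))); last first.
  move=> k _; rewrite exchange_big /=; apply: eq_bigr => k' _; rewrite E3 /e /ind eqxx; fld.
rewrite (eq_bigr (fun k : 'I_L => (L%:R * (2 ^+ L / 4) + 2 ^+ L / 4 : R))); last by move=> k _; rewrite sum_lin2 addr0.
rewrite sumr_const card_ord -mulr_natl; fld.
Qed.

Lemma M4 l : \sum_(s : {ffun 'I_L -> bool}) ind (s l) * nn s = (L%:R + 1) / 4 * 2 ^+ L.
Proof.
rewrite /nn (eq_bigr (fun s : {ffun 'I_L -> bool} => \sum_k ind (s l) * ind (s l) * ind (s k))); last first.
  by move=> s _; rewrite mulr_sumr; apply: eq_bigr => k _; rewrite indK.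
rewrite exchange_big /=.

rewrite (eq_bigr (fun k : 'I_L => (2 ^+ L / 4 : R) + 2 ^+ L / 4 * e l k + 0 * e l k)); last first.
  move=> k _; rewrite E3 /e /ind eqxx; fld.
rewrite sum_lin2; fld.
Qed.

Lemma M5 l : \sum_(s : {ffun 'I_L -> bool}) ind (s l) * nn s ^+ 2 = (L%:R ^+ 2 + 3 * L%:R) / 8 * 2 ^+ L.
Proof.
rewrite /nn (eq_bigr (fun s : {ffun 'I_L -> bool} => \sum_k \sum_k' ind (s l) * ind (s k) * ind (s k'))); last first.
  move=> s _; rewrite expr2 big_distrlr mulr_sumr; apply: eq_bigr => k _; rewrite mulr_sumr.
  by apply: eq_bigr => k' _; rewrite !mulrA.
rewrite exchange_big /=.
rewrite (eq_bigr (fun k : 'I_L => \sum_(k' < L) ((1 + e l k) / 8 * 2 ^+ L + 2 ^+ L / 8 * e l k' + 2 ^+ L / 8 * e k k'))); last first.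
  move=> k _; rewrite exchange_big /=; apply: eq_bigr => k' _; rewrite E3; fld.
rewrite (eq_bigr (fun k : 'I_L => (L%:R * (2 ^+ L / 8) : R) + 2 * 2 ^+ L / 8 + (L%:R * 2 ^+ L / 8) * e l k + 0 * e l k)); last first.
  by move=> k _; rewrite sum_lin2; fld.
rewrite sum_lin2; fld.
Qed.

Lemma sum_poly l q0 q1 q2 r0 r1 r2 :
  \sum_(s : {ffun 'I_L -> bool}) ((q0 + q1 * nn s + q2 * nn s ^+ 2)
      + ind (s l) * (r0 + r1 * nn s + r2 * nn s ^+ 2))
  = q0 * 2 ^+ L + q1 * (L%:R * 2 ^+ L / 2) + q2 * ((L%:R ^+ 2 + L%:R) / 4 * 2 ^+ L)
    + r0 * (2 ^+ L / 2) + r1 * ((L%:R + 1) / 4 * 2 ^+ L)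
    + r2 * ((L%:R ^+ 2 + 3 * L%:R) / 8 * 2 ^+ L).
Proof.
rewrite (eq_bigr (fun s : {ffun 'I_L -> bool} => q0 * 1 + q1 * nn s + q2 * nn s ^+ 2 + r0 * ind (s l)
   + r1 * (ind (s l) * nn s) + r2 * (ind (s l) * nn s ^+ 2))); last by move=> s _; ring.
by rewrite !big_split /= -!mulr_sumr M0 M1 M2 M3 M4 M5.
Qed.
End Mom.
Arguments ind {R}.
Arguments nn {R L}.
Arguments e {R L}.

Section Main.
Variable R : realFieldType.
Variables (d L : nat) (lambda : R) (ms0 ms1 mu0 mu1 : 'rV[R]_d).
Hypotheses (h0 : sqnorm ms0 = 1) (h1 : sqnorm ms1 = 1) (h01 : dotv ms0 ms1 = 0).

Definition pp (b : bool) := if b then ms1 else ms0.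

Lemma split_sum (s : {ffun 'I_L -> bool}) (beta : bool -> R) :
  \sum_(k < L) beta (s k) *: pp (s k)
  = (beta false * (L%:R - nn s)) *: ms0 + (beta true * nn s) *: ms1.
Proof.
rewrite (eq_bigr (fun k => ((1 - ind (s k)) * beta false) *: ms0 + (ind (s k) * beta true) *: ms1)); last first.
  by move=> k _; case: (s k); rewrite /ind /pp ?subrr ?subr0 ?mul0r ?scale0r ?add0r ?addr0 ?mul1r.
rewrite big_split /= -!scaler_suml -!mulr_suml sumrB sumr_const card_ord /nn.
by congr (_ *: _ + _ *: _); apply: mulrC.
Qed.

Definition x0 := dotv mu0 ms0.
Definition y0 := dotv mu1 ms0.
Definition x1 := dotv mu0 ms1.
Definition y1 := dotv mu1 ms1.

Lemma pointwise (s : {ffun 'I_L -> bool}) (l : 'I_L) :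
  let K := 2 / L%:R * lambda in
  let A := x0 ^+ 2 + y0 ^+ 2 in
  let B := x1 ^+ 2 + y1 ^+ 2 in
  let C := x0 * x1 + y0 * y1 in
  let n := nn s in
  sqnorm ((fun k => if s k then ms1 else ms0) l
     - Tlin lambda mu0 mu1 (fun k => if s k then ms1 else ms0) l)
  = ((1 - K * A * L%:R) ^+ 2 + 2 * K * A * (1 - K * A * L%:R) * n + K ^+ 2 * (A ^+ 2 + C ^+ 2) * n ^+ 2)
    + ind (s l) * ((1 + K ^+ 2 * C ^+ 2 * L%:R ^+ 2 - (1 - K * A * L%:R) ^+ 2)
                   + (- 2 * K * B - 2 * K ^+ 2 * C ^+ 2 * L%:R - 2 * K * A * (1 - K * A * L%:R)) * n
                   + (K ^+ 2 * (B ^+ 2 + C ^+ 2) - K ^+ 2 * (A ^+ 2 + C ^+ 2)) * n ^+ 2).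
Proof.
move=> K A B C n.
rewrite /Tlin.
set beta := fun b : bool => lambda * (dotv mu0 (pp (s l)) * dotv mu0 (pp b) + dotv mu1 (pp (s l)) * dotv mu1 (pp b)).
rewrite (eq_bigr (fun k => beta (s k) *: pp (s k))); last first.
  by move=> k _; rewrite bilin (dotvC _ mu0) (dotvC _ mu1).
rewrite split_sum /beta -/n.
have h10 : dotv ms1 ms0 = 0 by rewrite dotvC.
rewrite /=; case: (s l); rewrite /pp /ind;
rewrite /sqnorm !(dotvDl, dotvBl, dotvZl, dotvDr, dotvBr, dotvZr, dotvNl, dotvNr) -/(sqnorm ms0) -/(sqnorm ms1) h0 h1 h01 h10;
rewrite /K /A /B /C /x0 /y0 /x1 /y1 /=; ring.
Qed.
End Main.


Theorem proposition7 (R : realFieldType) (d L : nat) (lambda : R)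
    (ms0 ms1 : 'rV[R]_d) :
  (2 <= d)%N -> (1 <= L)%N -> 0 < lambda ->
  sqnorm ms0 = 1 -> sqnorm ms1 = 1 -> dotv ms0 ms1 = 0 ->
  forall mu0 mu1 : 'rV[R]_d,
    let k0 := dotv ms0 mu0 in
    let k1 := dotv ms1 mu1 in
    let e0 := dotv mu1 ms0 in
    let e1 := dotv mu0 ms1 in
    risk L lambda ms0 ms1 mu0 mu1 = risk_lt L lambda k0 k1 e0 e1 /\
    (sqnorm mu0 = 1 -> sqnorm mu1 = 1 ->
       [/\ -1 <= k0 <= 1, -1 <= k1 <= 1, -1 <= e0 <= 1 & -1 <= e1 <= 1]).
Proof.
move=> hd hL hlam h0 h1 h01 mu0 mu1 k0 k1 e0 e1; split; last first.
  by move=> hm0 hm1; split; apply: dot_bound.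
rewrite /risk /Eiid.
have L0 : (L%:R : R) != 0 by rewrite pnatr_eq0 -lt0n.
have P0 : (2 ^+ L : R) != 0 by rewrite expf_neq0 // pnatr_eq0.
rewrite (eq_bigr (fun l : 'I_L => 1 / 2 ^+ L * (
  let K := 2 / L%:R * lambda in
  let A := x0 ms0 mu0 ^+ 2 + y0 ms0 mu1 ^+ 2 in
  let B := x1 ms1 mu0 ^+ 2 + y1 ms1 mu1 ^+ 2 in
  let C := x0 ms0 mu0 * x1 ms1 mu0 + y0 ms0 mu1 * y1 ms1 mu1 in
  let q0 := (1 - K * A * L%:R) ^+ 2 in
  let q1 := 2 * K * A * (1 - K * A * L%:R) in
  let q2 := K ^+ 2 * (A ^+ 2 + C ^+ 2) in
  let r0 := 1 + K ^+ 2 * C ^+ 2 * L%:R ^+ 2 - (1 - K * A * L%:R) ^+ 2 in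
  let r1 := - 2 * K * B - 2 * K ^+ 2 * C ^+ 2 * L%:R - 2 * K * A * (1 - K * A * L%:R) in
  let r2 := K ^+ 2 * (B ^+ 2 + C ^+ 2) - K ^+ 2 * (A ^+ 2 + C ^+ 2) in
  q0 * 2 ^+ L + q1 * (L%:R * 2 ^+ L / 2) + q2 * ((L%:R ^+ 2 + L%:R) / 4 * 2 ^+ L)
    + r0 * (2 ^+ L / 2) + r1 * ((L%:R + 1) / 4 * 2 ^+ L)
    + r2 * ((L%:R ^+ 2 + 3 * L%:R) / 8 * 2 ^+ L)))); last first.
  move=> l _; congr (_ * _).
  rewrite (eq_bigr _ (fun s _ => pointwise lambda mu0 mu1 h0 h1 h01 s l)).
  by rewrite sum_poly.
rewrite sumr_const card_ord -mulr_natl.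
rewrite /risk_lt /k0 /k1 /e0 /e1 (dotvC ms0 mu0) (dotvC ms1 mu1) /x0 /y0 /x1 /y1 /=.
field.
by rewrite L0 P0.
Qed.
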